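(* Let $l,m,n\in\mathbb N$, $f:[l]\to[m]$, $g:[m]\to[n]$ and $H\in G[l]$. Then $(g\circ f)_{H*}=g_{Gf(H)*}\circ f_{H*}$ as maps $C(H)\to C(G(g\circ f)(H))$. Moreover, for every $l\in\mathbb N$ and $H\in G[l]$, $(\mathrm{id}_{[l]})_{H*}=\mathrm{id}_{C(H)}$.
   Context: $\mathbb N=\{0,1,2,\dots\}$, $[l]=\{0,\dots,l-1\}$. $G[l]$ is the set of hypergraphs on $[l]$, i.e. sets of non-empty subsets of $[l]$ (hyperedges); for $f:[l]\to[m]$, $Gf(H)=\{f(X)\mid X\in H\}$. $\mathsf A,\mathsf M$ are finite additive commutative monoids. For finite $X\subset\mathbb N$, $\mathsf A^X$ denotes functions $X\to\mathsf A$ and $\mathsf M^{\mathsf A^X}$ functions $\mathsf A^X\to\mathsf M$, both monoids under pointwise addition. For $\phi:X\to Y$ between finite subsets of $\mathbb N$, $\phi_\star:\mathsf A^X\to\mathsf A^Y$, $\phi_\star(w)(s)=\sum_{r\in X,\phi(r)=s}w(r)$, and $\phi_*:\mathsf M^{\mathsf A^X}\to\mathsf M^{\mathsf A^Y}$, $\phi_*(\varpi)(v)=\sum_{w:\phi_\star(w)=v}\varpi(w)$. A calibration $\varrho$ of $H\in G[l]$ assigns to each $X\in H$ an element $\varrho_X\in\mathsf M^{\mathsf A^X}$; $C(H)$ is the set of calibrations of $H$ (for $H=\emptyset$ it has exactly one element, the empty function). For $f:[l]\to[m]$, the push-forward $f_{H*}:C(H)\to C(Gf(H))$ is $f_{H*}(\varrho)_Y=\sum_{X\in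 H,\,f(X)=Y}(f|_X)_*(\varrho_X)$ for $Y\in Gf(H)$, where $f|_X:X\to f(X)$ is the restriction and the sum is taken in $\mathsf M^{\mathsf A^Y}$. *)

(* Defs.v *)
From HB Require Import structures.
From mathcomp Require Import all_boot all_algebra.
Set Implicit Arguments.
Unset Strict Implicit.
Unset Printing Implicit Defensive.
Import GRing.Theory.
Local Open Scope ring_scope.

(* [l] = 'I_l.  A, M : finite additive commutative monoids = finNmodType. *)

Definition elt (l : nat) (X : {set 'I_l}) : Type := {x : 'I_l | x \in X}.

Definition AX (A : finNmodType) (l : nat) (X : {set 'I_l}) := {ffun elt X -> A}.
Definition MAX (A M : finNmodType) (l : nat) (X : {set 'I_l}) :=
  {ffun AX A X -> M}.

Definition pstar (A : finNmodType) (I J : finType) (phi : I -> J)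
    (w : {ffun I -> A}) : {ffun J -> A} :=
  [ffun s => \sum_(r : I | phi r == s) w r].

Definition pshM (A M : finNmodType) (I J : finType) (phi : I -> J)
    (vp : {ffun {ffun I -> A} -> M}) : {ffun {ffun J -> A} -> M} :=
  [ffun v => \sum_(w : {ffun I -> A} | pstar phi w == v) vp w].

Definition hypergraph (l : nat) (H : {set {set 'I_l}}) : Prop :=
  forall X, X \in H -> X != set0.

Definition Gmap (l m : nat) (f : 'I_l -> 'I_m) (H : {set {set 'I_l}})
  : {set {set 'I_m}} := [set f @: X | X : {set 'I_l} in H].

Definition restr (l m : nat) (f : 'I_l -> 'I_m) (X : {set 'I_l})
    (x : elt X) : elt (f @: X) :=
  exist _ (f (val x)) (imset_f f (valP x)).

(* A calibration is represented as a (dependent) function giving a component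
   in M^(A^X) for every X; only components with X in H are meaningful, and
   equality of calibrations of H means equality of the components at X in H. *)
Definition calib (A M : finNmodType) (l : nat) := forall X : {set 'I_l}, MAX A M X.

Definition castMAX (A M : finNmodType) (l : nat) (X Y : {set 'I_l}) (e : X = Y)
  : MAX A M X -> MAX A M Y :=
  match e in _ = Y' return MAX A M X -> MAX A M Y' with erefl => id end.

Definition push (A M : finNmodType) (l m : nat) (f : 'I_l -> 'I_m)
    (H : {set {set 'I_l}}) (rho : calib A M l) : calib A M m :=
  fun Y => \sum_(X in H)
    match f @: X =P Y with
    | ReflectT e => castMAX e (pshM (restr f (X:=X)) (rho X))
    | ReflectF _ => 0
    end.

(* Main.v *)
Require Import Defs.
From mathcomp Require Import all_boot all_algebra.


Unset Strict Implicit.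
Import GRing.Theory.
Local Open Scope ring_scope.

Section S.
Variables (A M : finNmodType).

Definition pst {l m : nat} (h : 'I_l -> 'I_m) (X : {set 'I_l}) (Y : {set 'I_m})
  (w : AX A X) : AX A Y := [ffun y : elt Y => \sum_(x : elt X | h (val x) == val y) w x].

Definition Push {l m : nat} (h : 'I_l -> 'I_m) (X : {set 'I_l}) (Y : {set 'I_m})
  (p : MAX A M X) : MAX A M Y := [ffun v => \sum_(w : AX A X | pst h X Y w == v) p w].

Lemma castE l m (f : 'I_l -> 'I_m) (X : {set 'I_l}) Y (e : f @: X = Y) (p : MAX A M X) :
  castMAX e (pshM (restr f (X:=X)) p) = Push f X Y p.
Proof.
case: Y / e => /=; apply/ffunP => v; rewrite !ffunE; apply: eq_bigl => w.
congr (_ == v); apply/ffunP => y; rewrite !ffunE; apply: eq_bigl => x.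
Qed.

Lemma pushE l m (f : 'I_l -> 'I_m) H (rho : calib A M l) Y :
  push f H rho Y = \sum_(X in H | f @: X == Y) Push f X Y (rho X).
Proof.
rewrite /push big_mkcondr; apply: eq_bigr => X _.
case: (f @: X =P Y) => [e|ne] //=.
by rewrite castE.
Qed.

Lemma Push_sum l m (h : 'I_l -> 'I_m) X Y (I : Type) (r : seq I) (P : pred I) (F : I -> MAX A M X) :
  Push h X Y (\sum_(i <- r | P i) F i) = \sum_(i <- r | P i) Push h X Y (F i).
Proof.
apply/ffunP => v; rewrite !ffunE sum_ffunE.
under eq_bigr do rewrite sum_ffunE.
rewrite exchange_big /=; apply: eq_bigr => i _; by rewrite ffunE.
Qed.

Lemma pst_comp l m n (f : 'I_l -> 'I_m) (g : 'I_m -> 'I_n) X Y (w : AX A X) :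
  pst g (f @: X) Y (pst f X (f @: X) w) = pst (g \o f) X Y w.
Proof.
apply/ffunP => y; rewrite !ffunE.
under eq_bigr do rewrite ffunE big_mkcond.
rewrite exchange_big /= [RHS]big_mkcond; apply: eq_bigr => x _.
rewrite -big_mkcondr.
rewrite (eq_bigl (fun z => (z == restr f x) && (g (f (val x)) == val y))); last first.
  move=> z /=; rewrite -[z == _]val_eqE /= [f _ == _]eq_sym.
  by case: (val z =P f (val x)) => [->|]; rewrite ?andbF ?andbT ?andFb ?andTb.
case: (g (f (val x)) == val y).
  by rewrite (big_pred1 (restr f x)) // => i; rewrite andbT.
by rewrite big_pred0 // => i; rewrite andbF.
Qed.

Lemma Push_comp l m n (f : 'I_l -> 'I_m) (g : 'I_m -> 'I_n) X Y (p : MAX A M X) :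
  Push g (f @: X) Y (Push f X (f @: X) p) = Push (g \o f) X Y p.
Proof.
apply/ffunP => v; rewrite !ffunE.
under [RHS]eq_bigl do rewrite -pst_comp.
rewrite (partition_big (pst f X (f @: X)) (fun u => pst g (f @: X) Y u == v)) //=.
apply: eq_bigr => u /eqP Hu; rewrite ffunE; apply: eq_bigl => w.
by apply/idP/andP => [/eqP e|[_ ->]//]; rewrite e Hu eqxx.
Qed.

Lemma Push_id l (X : {set 'I_l}) (p : MAX A M X) : Push id X X p = p.
Proof.
apply/ffunP => v; rewrite ffunE (big_pred1 v) // => w /=.
have -> : pst id X X w = w.
  apply/ffunP => y; rewrite ffunE (big_pred1 y) // => x /=; exact: val_eqE.
by [].
Qed.
End S.

Theorem proposition3p19 (A M : finNmodType) :
  (forall (l m n : nat) (f : 'I_l -> 'I_m) (g : 'I_m -> 'I_n)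
          (H : {set {set 'I_l}}),
     hypergraph H ->
     forall rho : calib A M l,
     forall Y : {set 'I_n}, Y \in Gmap (g \o f) H ->
       push (g \o f) H rho Y = push g (Gmap f H) (push f H rho) Y)
  /\
  (forall (l : nat) (H : {set {set 'I_l}}),
     hypergraph H ->
     forall rho : calib A M l,
     forall X : {set 'I_l}, X \in H -> push id H rho X = rho X).
Proof.
split.
  move=> l m n f g H _ rho Y _.
  rewrite !pushE.
  under [RHS]eq_bigr do rewrite pushE Push_sum.
  apply/ffunP => v; rewrite !sum_ffunE.
  under [RHS]eq_bigr do rewrite sum_ffunE.
  rewrite (partition_big (fun X : {set 'I_l} => f @: X)
     (fun Z : {set 'I_m} => (Z \in Gmap f H) && (g @: Z == Y))) /=; last first.
    move=> X /andP[XH e]; rewrite /Gmap imset_f //=; by rewrite -imset_comp.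
  apply: eq_bigr => Z /andP[_ /eqP eZ]; apply: eq_big => X.
    case: (f @: X =P Z) => [e|]; rewrite ?andbF ?andbT //.
    by rewrite imset_comp e eZ eqxx andbT.
  by move=> /andP[_ /eqP <-]; rewrite Push_comp.
move=> l H _ rho X XH; rewrite pushE (big_pred1 X).
  exact: Push_id.
move=> X' /=; have -> : id @: X' = X' by exact: imset_id.
by case: (X' =P X) => [->|]; rewrite ?andbT ?andbF.
Qed.
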